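(* Let $G$ be a finitely generated group and let $S$ and $S'$ be finite generating sets of $G$, each closed under inverses. Then there is a constant $K$ such that $\Delta_S(n)\le K\,\Delta_{S'}(Kn)+K$ for all $n\ge1$.
   Context: For a finite generating set $T$ of $G$ closed under inverses, $\Gamma_T$ is the Cayley diagram (edge labelled $t$ from $g$ to $gt$), with word metric $d_T(g,g')$ = length of a shortest word in $T$ representing $g^{-1}g'$. A cycle of length $n\ge1$ in $\Gamma_T$ is a sequence $g_0,\dots,g_n$ in $G$ with an edge from each $g_{i-1}$ to $g_i$ and $g_n=g_0$. A (diagonal) triangulation of a circle: distinguish one or more points on the circle and join some of them by chords such that no two chords meet in the interior, the interior is divided into triangles, and each arc between neighbouring distinguished points is a side of a triangle; circles with at most three distinguished points count as triangulated with no chords. A triangulation of the cycle $g_0,\dots,g_n$ is such a triangulation of a circle with distinguished points $p_1,\dots,p_n$ labelled $g_1,\dots,g_n$ counterclockwise; a chord from $p_i$ to $p_j$ has length $d_T(g_i,g_j)$; a $k$-triangulation has all chord lengths $\le k$. $\Delta_T(n)$ is the least $k$ such that every cycle of length at most $n$ in $\Gamma_T$ has a $k$-triangulation. *)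

(* Defs.v *)
From Stdlib Require Import Arith List Lia ClassicalEpsilon.
Import ListNotations.

Record group := Group {
  carrier :> Type;
  gmul : carrier -> carrier -> carrier;
  gone : carrier;
  ginv : carrier -> carrier;
  gmulA : forall x y z, gmul x (gmul y z) = gmul (gmul x y) z;
  gmul1l : forall x, gmul gone x = x;
  gmulVl : forall x, gmul (ginv x) x = gone
}.

Section Cayley.
Variable G : group.

Fixpoint wprod (w : list G) : G :=
  match w with [] => gone G | t :: w' => gmul G t (wprod w') end.

Definition word_in (T : list G) (w : list G) : Prop := Forall (fun t => In t T) w.

Definition generates (T : list G) : Prop :=
  forall g : G, exists w, word_in T w /\ wprod w = g.

Definition inv_closed (T : list G) : Prop :=
  forall t, In t T -> In (ginv G t) T.

Definition is_word_dist (T : list G) (g h : G) (d : nat) : Prop :=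
  (exists w, word_in T w /\ wprod w = gmul G (ginv G g) h /\ length w = d) /\
  (forall w, word_in T w -> wprod w = gmul G (ginv G g) h -> d <= length w).

Definition word_dist (T : list G) (g h : G) : nat :=
  epsilon (inhabits 0) (is_word_dist T g h).

Definition is_cycle (T : list G) (n : nat) (g : nat -> G) : Prop :=
  1 <= n /\ g n = g 0 /\
  forall i, 1 <= i <= n -> exists t, In t T /\ g i = gmul G (g (i - 1)) t.

End Cayley.

(** Chord (a,c) between the distinguished points p_a and p_c, present only
    if they are not neighbours along the boundary of the sub-polygon. *)
Definition sub_chord (a c : nat) : list (nat * nat) :=
  if S a <? c then [(a, c)] else [].

(** [poly_tri a b C]: C is the set of chords of a triangulation of the polygon
    with consecutive vertices p_a, ..., p_b (a < b), whose side p_a p_b is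
    given (not counted in C): the side p_a p_b lies in a unique triangle
    p_a p_c p_b, and the two remaining sub-polygons are triangulated. *)
Inductive poly_tri : nat -> nat -> list (nat * nat) -> Prop :=
| poly_tri_edge a : poly_tri a (S a) []
| poly_tri_split a c b C1 C2 :
    a < c -> c < b -> poly_tri a c C1 -> poly_tri c b C2 ->
    poly_tri a b (C1 ++ C2 ++ sub_chord a c ++ sub_chord c b).

(** Diagonal triangulation of a circle with distinguished points p_1..p_n
    (counterclockwise), given by its set of chords C (pairs of indices). *)
Definition circle_tri (n : nat) (C : list (nat * nat)) : Prop :=
  (1 <= n <= 3 /\ C = []) \/ (4 <= n /\ poly_tri 1 n C).

Definition k_triangulation (G : group) (T : list G) (n : nat) (g : nat -> G) (k : nat) : Prop :=
  exists C, circle_tri n C /\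
    Forall (fun ij => word_dist G T (g (fst ij)) (g (snd ij)) <= k) C.

Definition tri_bound (G : group) (T : list G) (n k : nat) : Prop :=
  forall m g, m <= n -> is_cycle G T m g -> k_triangulation G T m g k.

Definition is_Delta (G : group) (T : list G) (n d : nat) : Prop :=
  tri_bound G T n d /\ forall k, tri_bound G T n k -> d <= k.

Definition Delta (G : group) (T : list G) (n : nat) : nat :=
  epsilon (inhabits 0) (is_Delta G T n).

(* Main.v *)
Require Import Defs.
From Stdlib Require Import Arith List.
From Stdlib Require Import Arith List Lia ClassicalEpsilon Classical.
Import ListNotations.

Lemma g_cancel (G : group) (y z : G) : gmul G (ginv G y) (gmul G y z) = z.
Proof. rewrite gmulA, gmulVl. apply gmul1l. Qed.
Lemma g_mulV (G : group) (x : G) : gmul G x (ginv G x) = gone G.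
Proof.
  set (y := gmul G x (ginv G x)).
  assert (Hyy : gmul G y y = y).
  { unfold y. rewrite <- gmulA. rewrite (gmulA G (ginv G x) x). rewrite gmulVl, gmul1l. reflexivity. }
  rewrite <- (g_cancel G y y). rewrite Hyy. apply gmulVl.
Qed.
Lemma g_mul1r (G : group) (x : G) : gmul G x (gone G) = x.
Proof. rewrite <- (gmulVl G x). rewrite gmulA, g_mulV. apply gmul1l. Qed.
Lemma g_inv_uniq (G : group) (x y : G) : gmul G x y = gone G -> y = ginv G x.
Proof. intro H. rewrite <- (g_cancel G x y), H. apply g_mul1r. Qed.
Lemma g_inv1 (G : group) : ginv G (gone G) = gone G.
Proof. symmetry. apply g_inv_uniq. apply gmul1l. Qed.
Lemma g_invM (G : group) (a b : G) : ginv G (gmul G a b) = gmul G (ginv G b) (ginv G a).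
Proof. symmetry. apply g_inv_uniq. rewrite <- gmulA. rewrite (gmulA G b). rewrite g_mulV, gmul1l. apply g_mulV. Qed.

Lemma wprod_app (G : group) (u v : list G) : wprod G (u ++ v) = gmul G (wprod G u) (wprod G v).
Proof. induction u; simpl. now rewrite gmul1l. rewrite IHu. apply gmulA. Qed.

Lemma word_in_app (G : group) T (u v : list G) : word_in G T u -> word_in G T v -> word_in G T (u ++ v).
Proof. unfold word_in; intros; apply Forall_app; auto. Qed.

Lemma word_inv (G : group) T (w : list G) : inv_closed G T -> word_in G T w ->
  word_in G T (rev (map (ginv G) w)) /\ wprod G (rev (map (ginv G) w)) = ginv G (wprod G w)
  /\ length (rev (map (ginv G) w)) = length w.
Proof.
  intros HT Hw. induction w as [|t w IH]; simpl.
  - rewrite g_inv1; auto.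
  - inversion Hw; subst. destruct (IH H2) as [A [B C]]. split; [|split].
    + apply word_in_app; auto. constructor; auto.
    + rewrite wprod_app, B; simpl. rewrite g_mul1r. now rewrite g_invM.
    + rewrite length_app; simpl; lia.
Qed.

Lemma min_exists (P : nat -> Prop) : (exists n, P n) -> exists n, P n /\ forall m, P m -> n <= m.
Proof.
  intros [n Hn]. revert Hn. induction n as [n IH] using (well_founded_induction lt_wf). intro Hn.
  destruct (classic (exists m, m < n /\ P m)) as [[m [Hm Pm]]|Hno].
  - apply (IH m Hm Pm).
  - exists n. split; auto. intros m Pm. destruct (le_lt_dec n m); auto. exfalso; eauto.
Qed.

Lemma word_dist_spec (G : group) T g h : generates G T ->
  is_word_dist G T g h (word_dist G T g h).
Proof.
  intro HT. unfold word_dist. apply epsilon_spec.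
  destruct (HT (gmul G (ginv G g) h)) as [w0 [Hw0 Hp0]].
  destruct (min_exists (fun d => exists w, word_in G T w /\ wprod G w = gmul G (ginv G g) h /\ length w = d))
    as [d [[w [A [B C]]] Hmin]].
  { exists (length w0), w0; auto. }
  exists d. split. exists w; auto. intros w' H1 H2. apply Hmin. exists w'; auto.
Qed.

Lemma word_dist_le (G : group) T g h w : generates G T -> word_in G T w ->
  wprod G w = gmul G (ginv G g) h -> word_dist G T g h <= length w.
Proof. intros HT H1 H2. destruct (word_dist_spec G T g h HT) as [_ B]. auto. Qed.

Lemma word_dist_word (G : group) T g h : generates G T ->
  exists w, word_in G T w /\ wprod G w = gmul G (ginv G g) h /\ length w = word_dist G T g h.
Proof. intros HT. destruct (word_dist_spec G T g h HT) as [A _]. auto. Qed.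

Lemma poly_tri_exists a b : a < b -> exists C, poly_tri a b C.
Proof.
  remember (b - a) as k. revert a b Heqk. induction k as [|k IH]; intros a b E H. lia.
  destruct (Nat.eq_dec b (S a)) as [->|Hne]. exists []; constructor.
  destruct (IH (S a) b ltac:(lia) ltac:(lia)) as [C2 HC2].
  eexists. apply (poly_tri_split a (S a) b [] C2); auto; try lia. constructor.
Qed.

Lemma sub_chord_range a c : Forall (fun p => a <= fst p /\ fst p < snd p /\ snd p <= c) (sub_chord a c).
Proof. unfold sub_chord. destruct (S a <? c) eqn:E; constructor; auto. apply Nat.ltb_lt in E; simpl; lia. Qed.

Lemma poly_tri_range a b C : poly_tri a b C -> Forall (fun p => a <= fst p /\ fst p < snd p /\ snd p <= b) C.
Proof.
  induction 1. constructor.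
  assert (HA := sub_chord_range a c). assert (HB := sub_chord_range c b).
  apply Forall_app; split; [|apply Forall_app; split; [|apply Forall_app; split]].
  - eapply Forall_impl; [|exact IHpoly_tri1]; simpl; intros; lia.
  - eapply Forall_impl; [|exact IHpoly_tri2]; simpl; intros; lia.
  - eapply Forall_impl; [|exact HA]; simpl; intros; lia.
  - eapply Forall_impl; [|exact HB]; simpl; intros; lia.
Qed.

Lemma sub_chord_Q (Q : nat -> nat -> Prop) a c : Q a c -> Forall (fun p => Q (fst p) (snd p)) (sub_chord a c).
Proof. unfold sub_chord. destruct (S a <? c); constructor; auto. Qed.

Lemma retract a b C' : poly_tri a b C' ->
  forall (rho : nat -> nat) (Q : nat -> nat -> Prop),
  (forall x y, a <= x -> x <= y -> y <= b -> rho x <= rho y) ->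
  (forall x, a <= x -> x < b -> rho (S x) <= S (rho x)) ->
  (forall x, a <= x -> x < b -> Q (rho x) (rho (S x))) ->
  Forall (fun p => Q (rho (fst p)) (rho (snd p))) C' ->
  Q (rho a) (rho b) -> rho a < rho b ->
  exists C, poly_tri (rho a) (rho b) C /\ Forall (fun p => Q (fst p) (snd p)) C.
Proof.
  induction 1 as [a|a c b C1 C2 Hac Hcb H1 IH1 H2 IH2];
    intros rho Q Hmon Hstep Hside HC Hab Hlt.
  - exists []. split; auto. replace (rho (S a)) with (S (rho a)). constructor.
    specialize (Hstep a ltac:(lia) ltac:(lia)). lia.
  - apply Forall_app in HC as [HC1 HC].
    apply Forall_app in HC as [HC2 HC].
    apply Forall_app in HC as [HCa HCb].
    assert (Qac : Q (rho a) (rho c)).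
    { unfold sub_chord in HCa. destruct (S a <? c) eqn:E.
      - inversion HCa; auto.
      - apply Nat.ltb_ge in E. replace c with (S a) by lia. apply Hside; lia. }
    assert (Qcb : Q (rho c) (rho b)).
    { unfold sub_chord in HCb. destruct (S c <? b) eqn:E.
      - inversion HCb; auto.
      - apply Nat.ltb_ge in E. replace b with (S c) by lia. apply Hside; lia. }
    assert (Hm1 : rho a <= rho c) by (apply Hmon; lia).
    assert (Hm2 : rho c <= rho b) by (apply Hmon; lia).
    assert (IH1' : rho a < rho c -> exists C, poly_tri (rho a) (rho c) C /\ Forall (fun p => Q (fst p) (snd p)) C).
    { intro. apply IH1; auto. intros; apply Hmon; lia. intros; apply Hstep; lia. intros; apply Hside; lia. }
    assert (IH2' : rho c < rho b -> exists C, poly_tri (rho c) (rho b) C /\ Forall (fun p => Q (fst p) (snd p)) C).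
    { intro. apply IH2; auto. intros; apply Hmon; lia. intros; apply Hstep; lia. intros; apply Hside; lia. }
    destruct (Nat.eq_dec (rho a) (rho c)) as [E1|E1].
    + rewrite E1. apply IH2'. lia.
    + destruct (Nat.eq_dec (rho c) (rho b)) as [E2|E2].
      * rewrite <- E2. apply IH1'. lia.
      * destruct (IH1' ltac:(lia)) as [D1 [T1 F1]]. destruct (IH2' ltac:(lia)) as [D2 [T2 F2]].
        eexists. split. apply (poly_tri_split _ (rho c)); eauto; lia.
        apply Forall_app; split; [|apply Forall_app; split; [|apply Forall_app; split]]; auto; apply sub_chord_Q; auto.
Qed.

Lemma cycle_path (G : group) T m g : is_cycle G T m g -> forall i j, i <= j -> j <= m ->
  exists w, word_in G T w /\ wprod G w = gmul G (ginv G (g i)) (g j) /\ length w = j - i.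
Proof.
  intros [Hm [Hc He]] i j Hij Hj. induction j as [|j IH].
  - assert (i = 0) by lia; subst. exists []. repeat split. constructor. simpl. now rewrite gmulVl.
  - destruct (Nat.eq_dec i (S j)) as [->|Hne].
    + exists []. repeat split. constructor. simpl. rewrite gmulVl. reflexivity. simpl; lia.
    + destruct (IH ltac:(lia) ltac:(lia)) as [w [A [B C]]].
      destruct (He (S j) ltac:(lia)) as [t [Ht Et]]. replace (S j - 1) with j in Et by lia.
      exists (w ++ [t]). split; [|split].
      * apply word_in_app; auto. constructor; auto.
      * rewrite wprod_app, B. simpl. rewrite g_mul1r, Et. symmetry; apply gmulA.
      * rewrite length_app, C. change (length [t]) with 1. lia.
Qed.

Lemma Delta_spec (G : group) T n : generates G T -> is_Delta G T n (Delta G T n).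
Proof.
  intro HT. unfold Delta. apply epsilon_spec.
  destruct (min_exists (tri_bound G T n)) as [d [A B]].
  - exists n. intros m g Hmn Hc.
    destruct (le_lt_dec m 3) as [Hle|Hlt].
    + exists []. split. left. destruct Hc; split; auto; lia. constructor.
    + destruct (poly_tri_exists 1 m ltac:(lia)) as [C HC]. exists C. split. right; auto.
      eapply Forall_impl; [|apply (poly_tri_range _ _ _ HC)]. simpl. intros [i j] [H1 [H2 H3]]; simpl in *.
      destruct (cycle_path G T m g Hc i j ltac:(lia) ltac:(lia)) as [w [W1 [W2 W3]]].
      eapply Nat.le_trans. apply (word_dist_le G T _ _ w HT W1 W2). lia.
  - exists d; split; auto.
Qed.

Definition wS (G : group) (T : list G) (g : G) : list G :=
  epsilon (inhabits []) (fun w => word_in G T w /\ wprod G w = g).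

Lemma wS_spec (G : group) T g : generates G T -> word_in G T (wS G T g) /\ wprod G (wS G T g) = g.
Proof. intro HT. unfold wS. apply epsilon_spec. apply HT. Qed.

Definition sumlen (G : group) (T U : list G) : nat :=
  fold_right (fun t acc => length (wS G T t) + acc) 0 U.

Lemma sumlen_ge (G : group) T U t : In t U -> length (wS G T t) <= sumlen G T U.
Proof. induction U; simpl; [tauto|]. intros [->|H]; [lia|]. specialize (IHU H); lia. Qed.

Lemma convert (G : group) S S' w : generates G S -> word_in G S' w ->
  exists u, word_in G S u /\ wprod G u = wprod G w /\ length u <= sumlen G S S' * length w.
Proof.
  intros HS Hw. induction w as [|t w IH].
  - exists []. split. constructor. simpl. split; auto; lia.
  - inversion Hw; subst. destruct (IH H2) as [u [A [B C]]].
    destruct (wS_spec G S t HS) as [D E].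
    exists (wS G S t ++ u). split. apply word_in_app; auto. split.
    rewrite wprod_app, B, E; reflexivity.
    rewrite length_app. pose proof (sumlen_ge G S S' t H1). simpl length. nia.
Qed.

Definition ww (G : group) (S' : list G) (t0 s : G) : list G := wS G S' s ++ [t0; ginv G t0].

Definition tt (G : group) (g : nat -> G) (i : nat) : G := gmul G (ginv G (g (i - 1))) (g i).
Definition WW (G : group) S' t0 g (i : nat) : list G := ww G S' t0 (tt G g i).
Definition BB (G : group) S' t0 g (j : nat) : list G := flat_map (WW G S' t0 g) (seq 1 j).
Definition sig (G : group) S' t0 g (j : nat) : nat := length (BB G S' t0 g j).
Definition hh (G : group) S' t0 g m (x : nat) : G := gmul G (g 0) (wprod G (firstn x (BB G S' t0 g m))).
Definition rho (G : group) S' t0 g m (x : nat) : nat :=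
  epsilon (inhabits 0) (fun i => 1 <= i <= m /\ sig G S' t0 g (i - 1) < x <= sig G S' t0 g i).

Lemma BB_S (G : group) S' t0 g j : BB G S' t0 g (S j) = BB G S' t0 g j ++ WW G S' t0 g (S j).
Proof. unfold BB. rewrite seq_S, flat_map_app. simpl. now rewrite app_nil_r. Qed.

Lemma WW_len (G : group) S' t0 g i : 2 <= length (WW G S' t0 g i).
Proof. unfold WW, ww. rewrite length_app. simpl. lia. Qed.

Lemma sig_S (G : group) S' t0 g j : sig G S' t0 g (S j) = sig G S' t0 g j + length (WW G S' t0 g (S j)).
Proof. unfold sig. rewrite BB_S, length_app. reflexivity. Qed.

Lemma sig_0 (G : group) S' t0 g : sig G S' t0 g 0 = 0.
Proof. reflexivity. Qed.

Lemma sig_lt (G : group) S' t0 g i j : i < j -> sig G S' t0 g i < sig G S' t0 g j.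
Proof.
  induction 1. rewrite sig_S. pose proof (WW_len G S' t0 g (S i)). lia.
  rewrite sig_S. lia.
Qed.

Lemma sig_le (G : group) S' t0 g i j : i <= j -> sig G S' t0 g i <= sig G S' t0 g j.
Proof. intro H. destruct (Nat.eq_dec i j). subst; lia. apply Nat.lt_le_incl, sig_lt; lia. Qed.

Lemma rho_ex (G : group) S' t0 g j x : 1 <= x <= sig G S' t0 g j ->
  exists i, 1 <= i <= j /\ sig G S' t0 g (i - 1) < x <= sig G S' t0 g i.
Proof.
  induction j as [|j IH]; intros H. rewrite sig_0 in H; lia.
  destruct (le_lt_dec x (sig G S' t0 g j)) as [Hle|Hlt].
  - destruct (IH ltac:(lia)) as [i Hi]. exists i; lia.
  - exists (S j). replace (S j - 1) with j by lia. lia.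
Qed.

Lemma rho_uniq (G : group) S' t0 g x i i' :
  sig G S' t0 g (i - 1) < x <= sig G S' t0 g i -> 1 <= i ->
  sig G S' t0 g (i' - 1) < x <= sig G S' t0 g i' -> 1 <= i' -> i = i'.
Proof.
  intros H1 Hi H2 Hi'. destruct (lt_eq_lt_dec i i') as [[Hl|]|Hl]; auto.
  - pose proof (sig_le G S' t0 g i (i' - 1) ltac:(lia)). lia.
  - pose proof (sig_le G S' t0 g i' (i - 1) ltac:(lia)). lia.
Qed.

Lemma rho_spec (G : group) S' t0 g m x : 1 <= x <= sig G S' t0 g m ->
  1 <= rho G S' t0 g m x <= m /\
  sig G S' t0 g (rho G S' t0 g m x - 1) < x <= sig G S' t0 g (rho G S' t0 g m x).
Proof. intro H. unfold rho. apply epsilon_spec. apply rho_ex; auto. Qed.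

Lemma rho_eq (G : group) S' t0 g m x i : 1 <= x <= sig G S' t0 g m -> 1 <= i ->
  sig G S' t0 g (i - 1) < x <= sig G S' t0 g i -> rho G S' t0 g m x = i.
Proof.
  intros H Hi Hs. destruct (rho_spec G S' t0 g m x H) as [A B].
  eapply rho_uniq; eauto; lia.
Qed.

Lemma firstn_S_snoc {A} (l : list A) k d : k < length l -> firstn (S k) l = firstn k l ++ [nth k l d].
Proof.
  revert k. induction l as [|a l IH]; intros k H; simpl in H. lia.
  destruct k. reflexivity. change (firstn (S (S k)) (a :: l)) with (a :: firstn (S k) l). rewrite IH by lia. reflexivity.
Qed.

Lemma g_cancel2 (G : group) (x y : G) : gmul G x (gmul G (ginv G x) y) = y.
Proof. rewrite gmulA, g_mulV. apply gmul1l. Qed.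

Lemma rho_mon (G : group) S' t0 g m x y : 1 <= x -> x <= y -> y <= sig G S' t0 g m ->
  rho G S' t0 g m x <= rho G S' t0 g m y.
Proof.
  intros. destruct (rho_spec G S' t0 g m x ltac:(lia)) as [A B].
  destruct (rho_spec G S' t0 g m y ltac:(lia)) as [C D].
  destruct (le_lt_dec (rho G S' t0 g m x) (rho G S' t0 g m y)); auto.
  pose proof (sig_le G S' t0 g (rho G S' t0 g m y) (rho G S' t0 g m x - 1) ltac:(lia)). lia.
Qed.

Lemma rho_step (G : group) S' t0 g m x : 1 <= x -> x < sig G S' t0 g m ->
  rho G S' t0 g m (S x) <= S (rho G S' t0 g m x).
Proof.
  intros. destruct (rho_spec G S' t0 g m x ltac:(lia)) as [A B].
  destruct (rho_spec G S' t0 g m (S x) ltac:(lia)) as [C D].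
  destruct (le_lt_dec (rho G S' t0 g m (S x)) (S (rho G S' t0 g m x))); auto.
  pose proof (sig_lt G S' t0 g (rho G S' t0 g m x) (rho G S' t0 g m (S x) - 1) ltac:(lia)). lia.
Qed.

Lemma rho_1 (G : group) S' t0 g m : 1 <= m -> rho G S' t0 g m 1 = 1.
Proof.
  intro Hm. pose proof (sig_le G S' t0 g 1 m Hm). pose proof (sig_lt G S' t0 g 0 1 ltac:(lia)).
  apply rho_eq; simpl; rewrite ?sig_0; lia.
Qed.

Lemma rho_M (G : group) S' t0 g m : 1 <= m -> rho G S' t0 g m (sig G S' t0 g m) = m.
Proof.
  intro Hm. pose proof (sig_lt G S' t0 g 0 m ltac:(lia)). pose proof (sig_lt G S' t0 g (m - 1) m ltac:(lia)).
  apply rho_eq; rewrite ?sig_0; lia.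
Qed.

Lemma WW_spec (G : group) S' t0 g i : generates G S' -> inv_closed G S' -> In t0 S' ->
  word_in G S' (WW G S' t0 g i) /\ wprod G (WW G S' t0 g i) = tt G g i.
Proof.
  intros H1 H2 H3. unfold WW, ww. destruct (wS_spec G S' (tt G g i) H1) as [A B]. split.
  - apply word_in_app; auto. repeat constructor; auto.
  - rewrite wprod_app, B. simpl. rewrite g_mul1r, g_mulV. apply g_mul1r.
Qed.

Lemma BB_word (G : group) S' t0 g j : generates G S' -> inv_closed G S' -> In t0 S' ->
  word_in G S' (BB G S' t0 g j).
Proof.
  intros. induction j. constructor. rewrite BB_S. apply word_in_app; auto. apply WW_spec; auto.
Qed.

Lemma BB_prod (G : group) S' t0 g j : generates G S' -> inv_closed G S' -> In t0 S' ->
  gmul G (g 0) (wprod G (BB G S' t0 g j)) = g j.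
Proof.
  intros. induction j. simpl. apply g_mul1r. rewrite BB_S, wprod_app.
  destruct (WW_spec G S' t0 g (S j)) as [_ E]; auto. rewrite E, gmulA, IHj. unfold tt.
  replace (S j - 1) with j by lia. apply g_cancel2.
Qed.

Lemma BB_prefix (G : group) S' t0 g j j' : j <= j' -> exists r, BB G S' t0 g j' = BB G S' t0 g j ++ r.
Proof.
  induction 1. exists []; now rewrite app_nil_r.
  destruct IHle as [r E]. exists (r ++ WW G S' t0 g (S m)). rewrite BB_S, E, app_assoc. reflexivity.
Qed.

Lemma tt_in (G : group) T0 m g i : is_cycle G T0 m g -> 1 <= i <= m -> In (tt G g i) T0.
Proof.
  intros [_ [_ He]] Hi. destruct (He i Hi) as [t [Ht E]]. unfold tt. rewrite E, g_cancel. auto.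
Qed.

Lemma WW_le (G : group) T0 S' t0 m g i : is_cycle G T0 m g -> 1 <= i <= m ->
  length (WW G S' t0 g i) <= sumlen G S' T0 + 2.
Proof.
  intros Hc Hi. unfold WW, ww. rewrite length_app. simpl length.
  pose proof (sumlen_ge G S' T0 (tt G g i) (tt_in G T0 m g i Hc Hi)). lia.
Qed.

Lemma sig_bound (G : group) T0 S' t0 m g j : is_cycle G T0 m g -> j <= m ->
  sig G S' t0 g j <= (sumlen G S' T0 + 2) * j.
Proof.
  intros Hc. induction j; intros Hj. rewrite sig_0; lia.
  rewrite sig_S. pose proof (WW_le G T0 S' t0 m g (S j) Hc ltac:(lia)). specialize (IHj ltac:(lia)). nia.
Qed.

Lemma hh_edge (G : group) S' t0 g m x : generates G S' -> inv_closed G S' -> In t0 S' ->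
  1 <= x <= sig G S' t0 g m ->
  exists t, In t S' /\ hh G S' t0 g m x = gmul G (hh G S' t0 g m (x - 1)) t.
Proof.
  intros H1 H2 H3 Hx. unfold hh, sig in *.
  exists (nth (x - 1) (BB G S' t0 g m) t0). split.
  - pose proof (BB_word G S' t0 g m H1 H2 H3) as W. unfold word_in in W. rewrite Forall_forall in W.
    apply W, nth_In. lia.
  - destruct x as [|y]; [lia|]. replace (S y - 1) with y by lia. rewrite (firstn_S_snoc _ _ t0) by lia.
    rewrite wprod_app. simpl. rewrite g_mul1r. apply gmulA.
Qed.

Lemma hh_0 (G : group) S' t0 g m : hh G S' t0 g m 0 = g 0.
Proof. unfold hh. simpl. apply g_mul1r. Qed.

Lemma hh_M (G : group) S' t0 g m : generates G S' -> inv_closed G S' -> In t0 S' ->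
  hh G S' t0 g m (sig G S' t0 g m) = g m.
Proof. intros. unfold hh, sig. rewrite firstn_all. apply BB_prod; auto. Qed.

Lemma close (G : group) T0 S' t0 g m x : generates G S' -> inv_closed G S' -> In t0 S' ->
  is_cycle G T0 m g -> 1 <= x <= sig G S' t0 g m ->
  exists c, word_in G S' c /\ length c <= sumlen G S' T0 + 2 /\
    g (rho G S' t0 g m x) = gmul G (hh G S' t0 g m x) (wprod G c).
Proof.
  intros H1 H2 H3 Hc Hx. destruct (rho_spec G S' t0 g m x Hx) as [A B].
  set (i := rho G S' t0 g m x) in *.
  set (k := x - sig G S' t0 g (i - 1)).
  exists (skipn k (WW G S' t0 g i)). split; [|split].
  - destruct (WW_spec G S' t0 g i H1 H2 H3) as [W _]. unfold word_in in *.
    rewrite <- (firstn_skipn k) in W. apply Forall_app in W; tauto.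
  - rewrite length_skipn. pose proof (WW_le G T0 S' t0 m g i Hc A). lia.
  - destruct (BB_prefix G S' t0 g i m ltac:(lia)) as [r E].
    unfold hh. rewrite E. rewrite firstn_app. unfold sig in *.
    replace (x - length (BB G S' t0 g i)) with 0 by lia. simpl firstn. rewrite app_nil_r.
    assert (EB : BB G S' t0 g i = BB G S' t0 g (i - 1) ++ WW G S' t0 g i).
    { clearbody i. destruct i as [|i']; [lia|]. rewrite BB_S. simpl. rewrite Nat.sub_0_r. reflexivity. }
    rewrite EB. rewrite firstn_app.
    rewrite firstn_all2 by lia. fold k.
    rewrite wprod_app.
    rewrite <- !gmulA. rewrite <- wprod_app, firstn_skipn.
    destruct (WW_spec G S' t0 g i H1 H2 H3) as [_ P].
    rewrite P, gmulA.
    rewrite (BB_prod G S' t0 g (i - 1) H1 H2 H3). unfold tt. apply eq_sym, g_cancel2.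
Qed.

Lemma sig_ge (G : group) S' t0 g j : j <= sig G S' t0 g j.
Proof. induction j. rewrite sig_0; lia. rewrite sig_S. pose proof (WW_len G S' t0 g (S j)). lia. Qed.

Lemma chord (G : group) S S' t0 g m x y v D : generates G S -> generates G S' -> inv_closed G S' ->
  In t0 S' -> is_cycle G S m g ->
  1 <= x <= sig G S' t0 g m -> 1 <= y <= sig G S' t0 g m ->
  word_in G S' v -> wprod G v = gmul G (ginv G (hh G S' t0 g m x)) (hh G S' t0 g m y) ->
  length v <= D + 1 ->
  word_dist G S (g (rho G S' t0 g m x)) (g (rho G S' t0 g m y)) <=
    sumlen G S S' * (2 * (sumlen G S' S + 2) + D + 1).
Proof.
  intros HS HS' HS'i Ht0 Hc Hx Hy Hv Pv Lv.
  destruct (close G S S' t0 g m x HS' HS'i Ht0 Hc Hx) as [cx [Wx [Lx Ex]]].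
  destruct (close G S S' t0 g m y HS' HS'i Ht0 Hc Hy) as [cy [Wy [Ly Ey]]].
  destruct (word_inv G S' cx HS'i Wx) as [Wi [Pi Li]].
  destruct (convert G S S' (rev (map (ginv G) cx) ++ v ++ cy) HS) as [u [Wu [Pu Lu]]].
  { apply word_in_app; auto. apply word_in_app; auto. }
  eapply Nat.le_trans. apply (word_dist_le G S _ _ u HS Wu).
  - rewrite Pu, !wprod_app, Pi, Pv, Ex, Ey, g_invM. repeat rewrite gmulA. reflexivity.
  - rewrite !length_app, Li in Lu. eapply Nat.le_trans; [exact Lu|]. nia.
Qed.

Lemma trivial_case (G : group) S n : generates G S -> (forall x : G, x = gone G) -> Delta G S n <= 0.
Proof.
  intros HS Ht. apply (proj2 (Delta_spec G S n HS)).
  intros m g Hmn Hc. destruct (le_lt_dec m 3).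
  - exists []. split. left. destruct Hc; split; auto; lia. constructor.
  - destruct (poly_tri_exists 1 m ltac:(lia)) as [C HC]. exists C. split. right; auto.
    apply Forall_forall. intros p _. apply Nat.le_0_r.
    apply Nat.le_0_r. apply (word_dist_le G S _ _ [] HS). constructor. simpl.
    rewrite (Ht (gmul _ _ _)). apply Ht.
Qed.

Theorem lemma3p1 (G : group) (S S' : list G) :
  generates G S -> inv_closed G S ->
  generates G S' -> inv_closed G S' ->
  exists K : nat, forall n : nat, 1 <= n ->
    Delta G S n <= K * Delta G S' (K * n) + K.
Proof.
  intros HS HSi HS' HS'i.
  assert (Hcase : (exists t0, In t0 S') \/ (forall x : G, x = gone G)).
  { destruct S' as [|t0 S0]. right. intro x. destruct (HS' x) as [w [Hw Pw]].
    destruct w; [simpl in Pw; auto|]. inversion Hw; simpl in *; tauto.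
    left; exists t0; simpl; auto. }
  destruct Hcase as [[t0 Ht0]|Htriv].
  2:{ exists 1. intros n _. pose proof (trivial_case G S n HS Htriv). lia. }
  set (L := sumlen G S' S + 2). set (L' := sumlen G S S').
  exists (L' * (2 * L + 2) + L). intros n Hn.
  set (K := L' * (2 * L + 2) + L) in *.
  set (D := Delta G S' (K * n)).
  assert (HD : tri_bound G S' (K * n) D) by (apply (proj1 (Delta_spec G S' (K * n) HS'))).
  apply (proj2 (Delta_spec G S n HS)).
  intros m g Hmn Hc.
  destruct (le_lt_dec m 3) as [Hm3|Hm4].
  { exists []. split. left. destruct Hc; split; auto; lia. constructor. }
  set (M := sig G S' t0 g m).
  pose proof (sig_ge G S' t0 g m) as HMm. fold M in HMm.
  pose proof (sig_bound G S S' t0 m g m Hc (le_n m)) as HML. fold M L in HML.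
  assert (HMK : M <= K * n) by (unfold K; nia).
  assert (Hcyc : is_cycle G S' M (hh G S' t0 g m)).
  { split; [lia|split].
    - unfold M. rewrite hh_M, hh_0 by auto. apply Hc.
    - intros i Hi. apply hh_edge; auto. }
  destruct (HD M (hh G S' t0 g m) HMK Hcyc) as [C' [HC' HF']].
  destruct HC' as [[? _]|[_ HT]]; [lia|].
  set (Q := fun i j => word_dist G S (g i) (g j) <= K * D + K).
  assert (HQ : forall x y v, 1 <= x <= M -> 1 <= y <= M -> word_in G S' v ->
     wprod G v = gmul G (ginv G (hh G S' t0 g m x)) (hh G S' t0 g m y) -> length v <= D + 1 ->
     Q (rho G S' t0 g m x) (rho G S' t0 g m y)).
  { intros x y v Hx Hy Wv Pv Lv. unfold Q.
    eapply Nat.le_trans. apply (chord G S S' t0 g m x y v D); auto.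
    fold L L'. unfold K. nia. }
  destruct (retract 1 M C' HT (rho G S' t0 g m) Q) as [C [HTC HFC]].
  - intros; apply rho_mon; auto.
  - intros; apply rho_step; auto.
  - intros x H1 H2. destruct (hh_edge G S' t0 g m (Datatypes.S x) HS' HS'i Ht0 ltac:(lia)) as [t [Ht Et]].
    replace (Datatypes.S x - 1) with x in Et by lia.
    apply (HQ x (Datatypes.S x) [t]); try lia. repeat constructor; auto.
    rewrite Et, g_cancel. simpl. apply g_mul1r. simpl; lia.
  - pose proof (poly_tri_range _ _ _ HT) as HR.
    rewrite Forall_forall in HR, HF' |- *. intros [x y] Hp.
    specialize (HR _ Hp). specialize (HF' _ Hp). simpl in *.
    destruct (word_dist_word G S' (hh G S' t0 g m x) (hh G S' t0 g m y) HS') as [v [Wv [Pv Lv]]].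
    apply (HQ x y v); auto; lia.
  - destruct (hh_edge G S' t0 g m 1 HS' HS'i Ht0 ltac:(lia)) as [t [Ht Et]].
    simpl in Et.
    apply (HQ 1 M [ginv G t]); try lia. repeat constructor; auto.
    unfold M. rewrite hh_M by auto. destruct Hc as [_ [Hg0 _]]. rewrite Hg0, <- (hh_0 G S' t0 g m), Et.
    rewrite g_invM. rewrite <- gmulA, gmulVl. simpl. reflexivity.
    simpl; lia.
  - rewrite rho_1, rho_M by lia. lia.
  - rewrite rho_1, rho_M in HTC by lia. exists C. split; [right; split; [lia|exact HTC]|exact HFC].
Qed.
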